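(* Let $a,b$ be integers with $0<a<b$, let $\gamma_1<\gamma_2<\cdots$ be the greedy dissociated sequence starting from $a,b$, and let $n_0(a,b)$ be the least integer such that $\gamma_n=2\gamma_{n-1}$ for all $n\ge n_0(a,b)$. Then $$n_0(a,b)\le L+2K+5,$$ where $L:=\lceil\log_2(2b+2)\rceil$ and $K:=\lceil\log_2 L\rceil$.
   Context: A set $\mathcal S\subseteq\mathbb N$ is dissociated if all of its finite subsets have different sums. The greedy dissociated sequence starting from $a,b$ is defined by $\gamma_1=a$, $\gamma_2=b$, and for $r\ge 3$, $\gamma_r$ is the smallest integer greater than $\gamma_{r-1}$ such that $\{\gamma_1,\dots,\gamma_r\}$ is dissociated. It is known that $\gamma_n=2\gamma_{n-1}$ for all sufficiently large $n$, so $n_0(a,b)$ is well defined. *)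

(* Defs.v *)
From HB Require Import structures.
From mathcomp Require Import all_boot.
From mathcomp Require Import finmap.
Set Implicit Arguments. Unset Strict Implicit. Unset Printing Implicit Defensive.
Local Open Scope fset_scope.

Definition dissociated (A : {fset nat}) : Prop :=
  forall B C : {fset nat}, B `<=` A -> C `<=` A ->
    (\sum_(x <- B) x)%N = (\sum_(x <- C) x)%N -> B = C.

Definition first_terms (g : nat -> nat) (r : nat) : {fset nat} :=
  [fset g i | i in iota 1 r].

(* g (indexed from 1; g 0 is irrelevant) is the greedy dissociated sequence
   starting from a, b:  g 1 = a, g 2 = b, and for r >= 3, g r is the least
   integer > g (r-1) such that {g 1, ..., g r} is dissociated. *)
Definition greedy_dissociated (a b : nat) (g : nat -> nat) : Prop :=
  [/\ g 1 = a, g 2 = b &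
      forall r, 3 <= r ->
        [/\ g r.-1 < g r,
            dissociated (first_terms g r) &
            forall m, g r.-1 < m < g r ->
              ~ dissociated (m |` first_terms g r.-1)]].

(* Main.v *)
From Stdlib Require Import ZArith Lia Classical.
Require Import Defs.
From mathcomp Require Import all_boot.
From mathcomp Require Import finmap.
From mathcomp Require Import zify.
Set Implicit Arguments. Unset Strict Implicit.
Local Open Scope fset_scope.

Definition sm (B : {fset nat}) : nat := (\sum_(x <- B) x)%N.

Lemma in_ft g r x : (x \in first_terms g r) = has (fun i => x == g i) (iota 1 r).
Proof.
apply/idP/idP.
- case/imfsetP => i /= hi ->. by apply/hasP; exists i.
- case/hasP => i hi /eqP ->. by apply/imfsetP; exists i.
Qed.

Lemma in_ftP g r x : reflect (exists2 i, 1 <= i <= r & x = g i) (x \in first_terms g r).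
Proof.
rewrite in_ft; apply: (iffP hasP).
- case=> i; rewrite mem_iota => hi /eqP ->; exists i => //; lia.
- case=> i hi ->; exists i => //; rewrite mem_iota; lia.
Qed.

Lemma g_lt a b g : 0 < a -> a < b -> greedy_dissociated a b g ->
  forall i j, 1 <= i -> i < j -> g i < g j.
Proof.
move=> ha hab [g1 g2 gr] i j hi.
have step : forall k, 1 <= k -> g k < g k.+1.
  case=> [|[|k]] //= _; first by rewrite g1 g2.
  by have [] := gr k.+3 isT.
elim: j => [|j IH] // hij.
have [->|hne] := eqVneq i j; first by apply: step; lia.
have hij' : i < j by lia.
apply: (ltn_trans (IH hij')); apply: step; lia.
Qed.

Lemma ftS g r : first_terms g r.+1 = g r.+1 |` first_terms g r.
Proof.
apply/fsetP => x; apply/in_ftP/fset1UP.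
- case=> i hi ->. have [->|hne] := eqVneq i r.+1; first by left.
  right; apply/in_ftP; exists i => //; lia.
- case=> [->|/in_ftP [i hi ->]]; [exists r.+1 => //; lia | exists i => //; lia].
Qed.

Lemma ft_notin a b g r : 0 < a -> a < b -> greedy_dissociated a b g ->
  g r.+1 \notin first_terms g r.
Proof.
move=> ha hab H; apply/negP => /in_ftP [i hi heq].
have h1 : g i < g r.+1 by apply: (g_lt ha hab H); lia.
by move: h1; rewrite heq ltnn.
Qed.

Lemma ft_sub g r s : r <= s -> first_terms g r `<=` first_terms g s.
Proof.
move=> hrs; apply/fsubsetP => x /in_ftP [i hi ->]; apply/in_ftP; exists i => //; lia.
Qed.

Lemma card_ft a b g r : 0 < a -> a < b -> greedy_dissociated a b g ->
  #|` first_terms g r| = r.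
Proof.
move=> ha hab H; elim: r => [|r IH].
  apply/eqP; rewrite cardfs_eq0; apply/eqP/fsetP => x; rewrite inE.
  by apply/negP => /in_ftP [i hi _]; lia.
by rewrite ftS cardfsU1 (ft_notin r ha hab H) IH.
Qed.

Lemma dissoc_sub A B : A `<=` B -> dissociated B -> dissociated A.
Proof.
move=> hAB hB X Y hX hY; apply: hB; exact: fsubset_trans hAB.
Qed.

Lemma dissoc_ft a b g r : 0 < a -> a < b -> greedy_dissociated a b g ->
  2 <= r -> dissociated (first_terms g r).
Proof.
move=> ha hab H hr.
have [_ _ gr] := H.
have h3 : dissociated (first_terms g (maxn r 3)) by have [] := gr (maxn r 3) (leq_maxr _ _).
apply: dissoc_sub h3; apply: ft_sub; exact: leq_maxl.
Qed.

Lemma sm_U1 (a : nat) (B : {fset nat}) : a \notin B -> sm (a |` B) = (a + sm B)%N.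
Proof. by move=> h; rewrite /sm big_fsetU1. Qed.

Lemma sm_D1 (a : nat) (B : {fset nat}) : a \in B -> sm B = (a + sm (B `\ a))%N.
Proof. by move=> h; rewrite /sm (big_fsetD1 a). Qed.

Lemma sm_sub (B A : {fset nat}) : B `<=` A -> sm B <= sm A.
Proof.
move=> hBA; rewrite /sm [X in _ <= X](big_fsetID _ (mem B)) /=.
have -> : [fset x in A | x \in B] = B.
  apply/fsetP => x; rewrite !inE /=; apply/andP/idP => [[] //|hx]; split => //.
  exact: (fsubsetP hBA).
exact: leq_addr.
Qed.

Lemma sm0 : sm fset0 = 0.
Proof. by rewrite /sm big_seq_fset0. Qed.

Definition D g r (x : Z) : Prop :=
  exists B C, B `<=` first_terms g r /\ C `<=` first_terms g r /\
    x = (Z.of_nat (sm B) - Z.of_nat (sm C))%Z.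

Definition S g r := sm (first_terms g r).

Lemma D0 g r : D g r 0.
Proof. exists fset0, fset0; rewrite !fsub0set sm0; split => //; split => //. Qed.

Lemma Dsym g r x : D g r x -> D g r (- x).
Proof. case=> B [C [hB [hC ->]]]; exists C, B; split => //; split => //; lia. Qed.

Lemma Dmono g r s x : r <= s -> D g r x -> D g s x.
Proof.
move=> hrs [B [C [hB [hC ->]]]]; exists B, C; split; last split => //.
  exact: fsubset_trans hB (ft_sub g hrs).
exact: fsubset_trans hC (ft_sub g hrs).
Qed.

Lemma notin_sub (x : nat) (B A : {fset nat}) : x \notin A -> B `<=` A -> x \notin B.
Proof. by move=> hx hB; apply/negP => /(fsubsetP hB); apply/negP. Qed.

Lemma sub_U1 (x : nat) (B A : {fset nat}) : B `<=` A -> x |` B `<=` x |` A.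
Proof.
move=> hB; apply/fsubsetP => y /fset1UP [->|hy]; first exact: fset1U1.
by apply: fset1Ur; exact: (fsubsetP hB).
Qed.

Lemma Dadd a b g r x : 0 < a -> a < b -> greedy_dissociated a b g ->
  D g r x -> D g r.+1 (x + Z.of_nat (g r.+1)) /\ D g r.+1 (x - Z.of_nat (g r.+1)).
Proof.
move=> ha hab H [B [C [hB [hC ->]]]].
have hn := ft_notin r ha hab H.
split.
- exists (g r.+1 |` B), C; rewrite ftS; split; first exact: sub_U1.
  split; first exact: fsubset_trans hC (fsubsetU1 _ _).
  rewrite sm_U1; [lia | exact: notin_sub hn hB].
- exists B, (g r.+1 |` C); rewrite ftS; split; first exact: fsubset_trans hB (fsubsetU1 _ _).
  split; first exact: sub_U1.
  rewrite sm_U1; [lia | exact: notin_sub hn hC].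
Qed.

Lemma subU1_D1 (x : nat) (B A : {fset nat}) : B `<=` x |` A -> B `\ x `<=` A.
Proof.
move=> hB; apply/fsubsetP => y /fsetD1P [hyx hy].
by move: (fsubsetP hB y hy) => /fset1UP [/eqP h|//]; rewrite h in hyx.
Qed.

Lemma subU1_notin (x : nat) (B A : {fset nat}) : B `<=` x |` A -> x \notin B -> B `<=` A.
Proof.
move=> hB hx; apply/fsubsetP => y hy.
move: (fsubsetP hB y hy) => /fset1UP [h|//]; by rewrite -h hy in hx.
Qed.

Lemma Dsplit g r x : D g r.+1 x ->
  D g r x \/ D g r (x - Z.of_nat (g r.+1)) \/ D g r (x + Z.of_nat (g r.+1)).
Proof.
case=> B [C [hB [hC ->]]]; rewrite ftS in hB hC.
set y := g r.+1.
have [yB|yB] := boolP (y \in B); have [yC|yC] := boolP (y \in C).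
- left; exists (B `\ y), (C `\ y); split; first exact: subU1_D1 hB.
  split; first exact: subU1_D1 hC.
  rewrite (sm_D1 yB) (sm_D1 yC); lia.
- right; left; exists (B `\ y), C; split; first exact: subU1_D1 hB.
  split; first exact: subU1_notin hC yC.
  rewrite (sm_D1 yB); lia.
- right; right; exists B, (C `\ y); split; first exact: subU1_notin hB yB.
  split; first exact: subU1_D1 hC.
  rewrite (sm_D1 yC); lia.
- left; exists B, C; split; first exact: subU1_notin hB yB.
  split; first exact: subU1_notin hC yC.
  done.
Qed.

Lemma Dbound g r x : D g r x -> (x <= Z.of_nat (S g r))%Z.
Proof.
case=> B [C [hB [hC ->]]]; have := sm_sub hB; rewrite /S; lia.
Qed.

Lemma Dg g r i : 1 <= i <= r -> D g r (Z.of_nat (g i)).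
Proof.
move=> hi; exists [fset g i], fset0; split.
  by rewrite fsub1set; apply/in_ftP; exists i.
split; first exact: fsub0set.
rewrite sm0 /sm big_seq_fset1; lia.
Qed.

Lemma S_succ a b g r : 0 < a -> a < b -> greedy_dissociated a b g ->
  S g r.+1 = (g r.+1 + S g r)%N.
Proof. move=> ha hab H; rewrite /S ftS sm_U1 //; exact: (ft_notin r ha hab H). Qed.

Lemma ft0 g : first_terms g 0 = fset0.
Proof. by apply/fsetP => x; rewrite inE; apply/negP => /in_ftP [i hi _]; lia. Qed.

Lemma S_le a b g r : 0 < a -> a < b -> greedy_dissociated a b g ->
  S g r <= r * g r.
Proof.
move=> ha hab H; elim: r => [|r IH]; first by rewrite /S ft0 sm0.
rewrite (S_succ r ha hab H).
case: r IH => [|r] IH; first by rewrite /S ft0 sm0 in IH *; lia.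
have : g r.+1 < g r.+2 by apply: (g_lt ha hab H); lia.
nia.
Qed.

Lemma count_dissoc (A : {fset nat}) : dissociated A -> 2 ^ #|` A| <= (sm A).+1.
Proof.
move=> hA.
have inj : {in fpowerset A &, injective sm}.
  move=> B C; rewrite !fpowersetE => hB hC; exact: hA.
move/card_in_imfsetP: inj => /eqP; rewrite card_fpowerset => <-.
have sub : [fset sm B | B in fpowerset A] `<=` [fset x in iota 0 (sm A).+1].
  apply/fsubsetP => y /imfsetP [B /= hB ->]; rewrite !inE /= mem_iota /= ltnS.
  rewrite fpowersetE in hB; move: (sm_sub hB); lia.
apply: leq_trans (fsubset_leq_card sub) _.
by rewrite card_fseq (leq_trans (size_undup _)) // size_iota.
Qed.

Lemma G1 a b g r x : 0 < a -> a < b -> greedy_dissociated a b g ->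
  2 <= r -> g r < x < g r.+1 -> D g r (Z.of_nat x).
Proof.
move=> ha hab H hr hx.
have [_ _ gr] := H.
have [_ _ hgap] := gr r.+1 (hr : 2 < r.+1).
have hA := dissoc_ft ha hab H hr.
apply: NNPP => hnD; apply: (hgap x hx) => B C hB hC hsum.
have [xB|xB] := boolP (x \in B); have [xC|xC] := boolP (x \in C).
- rewrite -(fsetD1K xB) -(fsetD1K xC); congr (_ |` _).
  apply: hA; [exact: subU1_D1 hB | exact: subU1_D1 hC |].
  suff : sm (B `\ x) = sm (C `\ x) by [].
  move: hsum; rewrite -/(sm B) -/(sm C) (sm_D1 xB) (sm_D1 xC); lia.
- exfalso; apply: hnD; exists C, (B `\ x); split; first exact: subU1_notin hC xC.
  split; first exact: subU1_D1 hB.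
  move: hsum; rewrite -/(sm B) -/(sm C) (sm_D1 xB); lia.
- exfalso; apply: hnD; exists B, (C `\ x); split; first exact: subU1_notin hB xB.
  split; first exact: subU1_D1 hC.
  move: hsum; rewrite -/(sm B) -/(sm C) (sm_D1 xC); lia.
- apply: hA; [exact: subU1_notin hB xB | exact: subU1_notin hC xC | exact: hsum].
Qed.

Lemma G2 a b g r : 0 < a -> a < b -> greedy_dissociated a b g ->
  2 <= r -> ~ D g r (Z.of_nat (g r.+1)).
Proof.
move=> ha hab H hr [B [C [hB [hC he]]]].
have [_ _ gr] := H.
have [_ hA _] := gr r.+1 (hr : 2 < r.+1).
have hn := ft_notin r ha hab H.
have e : g r.+1 |` C = B.
  apply: hA.
  - rewrite ftS; exact: sub_U1.
  - rewrite ftS; exact: fsubset_trans hB (fsubsetU1 _ _).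
  - rewrite -/(sm B) -/(sm (g r.+1 |` C)) sm_U1; [lia | exact: notin_sub hn hC].
have : g r.+1 \in B by rewrite -e fset1U1.
by move=> /(fsubsetP hB); apply/negP.
Qed.

Lemma g_step a b g r : 0 < a -> a < b -> greedy_dissociated a b g ->
  1 <= r -> g r < g r.+1.
Proof. move=> ha hab H hr; apply: (g_lt ha hab H) => //. Qed.

Lemma W a b g r x : 0 < a -> a < b -> greedy_dissociated a b g ->
  2 <= r -> b <= x < g r.+1 -> D g r (Z.of_nat x).
Proof.
move=> ha hab H hr; have [g1 g2 _] := H.
elim: r hr x => [|r IH] // hr x hx.
have [hr2|hr2] := leqP r 1.
  have e1 : r = 1 by lia.
  subst r.
  have [->|hne] := eqVneq x b; first by rewrite -g2; apply: Dg.
  apply: (G1 ha hab H) => //; rewrite g2; lia.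
have [hlt|hge] := ltnP x (g r.+1).
  apply: Dmono (leqnSn r) _; apply: IH => //; lia.
have [->|hne] := eqVneq x (g r.+1); first by apply: Dg; lia.
apply: (G1 ha hab H) => //; lia.
Qed.

Lemma full a b g r : 0 < a -> a < b -> greedy_dissociated a b g ->
  2 <= r -> 2 * b - 1 <= g r.+1 ->
  forall x, 1 <= x <= g r.+1 -> D g r.+1 (Z.of_nat x).
Proof.
move=> ha hab H hr hg x hx.
have hs := g_step ha hab H (r := r.+1) isT.
have [hxb|hxb] := leqP b x.
  apply: (W ha hab H) => //; lia.
have hy : D g r (Z.of_nat (g r.+1 - x)) by apply: (W ha hab H) => //; lia.
have [h1 h2] := Dadd ha hab H hy.
have e : (Z.of_nat (g r.+1 - x) - Z.of_nat (g r.+1) = - Z.of_nat x)%Z by lia.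
rewrite e in h2; have := Dsym h2; by rewrite Z.opp_involutive.
Qed.

Lemma find_gap (P : nat -> Prop) c N : (forall x, 1 <= x <= c -> P x) -> ~ P N -> 1 <= N ->
  exists M, [/\ c < M, M <= N, (forall x, 1 <= x < M -> P x) & ~ P M].
Proof.
move=> hc; elim/ltn_ind: N => N IH hN hN1.
have [hall|hnot] := classic (forall x, 1 <= x < N -> P x).
  exists N; split => //.
  rewrite ltnNge; apply/negP => hle; apply: hN; apply: hc; lia.
have [x hx] := not_all_ex_not _ _ hnot.
have [hx1 hx2] : (1 <= x < N) /\ ~ P x.
  split; first by apply: NNPP => h; apply: hx => h'; exfalso; apply: h.
  by move=> px; apply: hx => _.
have [M [hM1 hM2 hM3 hM4]] := IH x (proj2 (andP hx1)) hx2 (proj1 (andP hx1)).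
exists M; split => //; lia.
Qed.

Definition I g q M := [/\ g q < M, (forall x, 1 <= x < M -> D g q (Z.of_nat x)) &
  ~ D g q (Z.of_nat M)].

Lemma D1 a b g q M : 0 < a -> a < b -> greedy_dissociated a b g ->
  2 <= q -> I g q M -> g q.+1 = M.
Proof.
move=> ha hab H hq [h1 h2 h3].
have hs := g_step ha hab H (r := q) (ltnW hq).
have [hlt|hge] := ltnP (g q.+1) M.
  exfalso; apply: (G2 ha hab H hq); apply: h2; lia.
have [->|hne] := eqVneq (g q.+1) M => //.
exfalso; apply: h3; apply: (G1 ha hab H) => //; lia.
Qed.

Lemma cover a b g q M : 0 < a -> a < b -> greedy_dissociated a b g ->
  2 <= q -> I g q M -> forall x, 1 <= x < 2 * M -> D g q.+1 (Z.of_nat x).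
Proof.
move=> ha hab H hq hI x hx.
have e := D1 ha hab H hq hI.
case: hI => [h1 h2 h3].
have [hlt|hge] := ltnP x M; first by apply: Dmono (leqnSn q) _; apply: h2; lia.
have [->|hne] := eqVneq x M; first by rewrite -e; apply: Dg; lia.
have hy : D g q (Z.of_nat (x - M)) by apply: h2; lia.
have [k _] := Dadd ha hab H hy.
have e2 : (Z.of_nat (x - M) + Z.of_nat (g q.+1) = Z.of_nat x)%Z by rewrite e; lia.
by rewrite e2 in k.
Qed.

Lemma Dnotbig g r x : (Z.of_nat (S g r) < x)%Z -> ~ D g r x.
Proof. by move=> h /Dbound; lia. Qed.

Lemma D2 a b g q M : 0 < a -> a < b -> greedy_dissociated a b g ->
  2 <= q -> I g q M ->
  exists M', [/\ 2 * M <= M', I g q.+1 M' & S g q.+1 + M <= S g q + M'].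
Proof.
move=> ha hab H hq hI.
have e := D1 ha hab H hq hI.
have hc := cover ha hab H hq hI.
have hM : g q < M by case: hI.
have hn : ~ D g q.+1 (Z.of_nat (S g q.+1).+1) by apply: Dnotbig; lia.
have [M' [hM1 hM2 hM3 hM4]] :=
  find_gap (P := fun x => D g q.+1 (Z.of_nat x)) (c := 2 * M - 1)
    (fun x hx => hc x ltac:(lia)) hn isT.
have hS := S_succ q ha hab H.
exists M'; split; [lia | split => //; lia | lia].
Qed.

Lemma D3 a b g q M : 0 < a -> a < b -> greedy_dissociated a b g ->
  2 <= q -> I g q M -> S g q < 2 * M ->
  [/\ I g q.+1 (2 * M), S g q.+1 < 4 * M & g q.+1 = M].
Proof.
move=> ha hab H hq hI hS.
have e := D1 ha hab H hq hI.
have hc := cover ha hab H hq hI.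
have hS1 := S_succ q ha hab H.
split; [split | lia | exact: e].
- rewrite e; case: hI => ? _ _; lia.
- exact: hc.
- move=> /Dsplit [h|[h|h]].
  + by apply: (Dnotbig _ h); lia.
  + have e2 : (Z.of_nat (2 * M) - Z.of_nat (g q.+1) = Z.of_nat M)%Z by rewrite e; lia.
    by rewrite e2 in h; case: hI => _ _; apply.
  + by apply: (Dnotbig _ h); rewrite e; lia.
Qed.

Lemma iterD3 a b g q M : 0 < a -> a < b -> greedy_dissociated a b g ->
  2 <= q -> I g q M -> S g q < 2 * M ->
  forall j, I g (q + j) (2 ^ j * M) /\ S g (q + j) < 2 * (2 ^ j * M).
Proof.
move=> ha hab H hq hI hS; elim=> [|j [IH1 IH2]]; first by rewrite addn0 expn0 mul1n.
have [k1 k2 _] := D3 ha hab H (leq_trans hq (leq_addr j q)) IH1 IH2.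
rewrite addnS expnS -mulnA; split => //; lia.
Qed.

Lemma doubling a b g q M : 0 < a -> a < b -> greedy_dissociated a b g ->
  2 <= q -> I g q M -> S g q < 2 * M ->
  forall n, q + 2 <= n -> g n = 2 * g n.-1.
Proof.
move=> ha hab H hq hI hS n hn.
have it := iterD3 ha hab H hq hI hS.
have gv : forall j, g (q + j).+1 = 2 ^ j * M.
  move=> j; have [k1 _] := it j; exact: D1 ha hab H (leq_trans hq (leq_addr j q)) k1.
have -> : n = (q + (n - q - 2).+1).+1 by lia.
rewrite gv /= addnS gv expnS; lia.
Qed.

Lemma iterD2 a b g R M0 : 0 < a -> a < b -> greedy_dissociated a b g ->
  2 <= R -> I g R M0 ->
  forall j, exists Mj, [/\ I g (R + j) Mj, 2 ^ j * M0 <= Mj & S g (R + j) + M0 <= S g R + Mj].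
Proof.
move=> ha hab H hR hI; elim=> [|j [Mj [h1 h2 h3]]].
  by exists M0; rewrite addn0 expn0 mul1n.
have [M' [k1 k2 k3]] := D2 ha hab H (leq_trans hR (leq_addr j R)) h1.
exists M'; rewrite addnS expnS; split => //; lia.
Qed.
Local Close Scope fset_scope.
Unset Implicit Arguments.
Theorem corollary1 (a b : nat) (g : nat -> nat) :
  0 < a -> a < b -> greedy_dissociated a b g ->
  let L := up_log 2 (2 * b + 2) in
  let K := up_log 2 L in
  forall n, L + 2 * K + 5 <= n -> g n = 2 * g n.-1.
Proof.
move=> ha hab H L K n hn.
have hL : 2 * b + 2 <= 2 ^ L by apply: up_logP.
have hK : L <= 2 ^ K by apply: up_logP.
have hL3 : 3 <= L.
  rewrite leqNgt; apply/negP => h.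
  have : 2 ^ L <= 2 ^ 2 by rewrite leq_exp2l //; lia.
  lia.
have hKL : K < L.
  have : K <= L.-1.
    apply: up_log_min => //.
    have := ltn_expl L.-1 (isT : 1 < 2); lia.
  lia.
set R := L + K + 1.
have hR2 : 2 <= R by lia.
have hcount : 2 ^ R <= R * g R + 1.
  have := count_dissoc (dissoc_ft ha hab H hR2).
  rewrite (card_ft R ha hab H) => h.
  have := S_le R ha hab H; rewrite /S; lia.
have hPR : 2 ^ R = 2 * 2 ^ L * 2 ^ K by rewrite /R addn1 expnS expnD mulnA.
have hgR : 2 * b - 1 <= g R.
  rewrite leqNgt; apply/negP => hlt.
  have h1 : R * g R + 1 < R * 2 ^ L.
    have : R * (g R).+1 < R * 2 ^ L by rewrite ltn_pmul2l; lia.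
    rewrite mulnS; lia.
  have h2 : R * 2 ^ L <= 2 * 2 ^ L * 2 ^ K.
    apply: (leq_trans (leq_mul (_ : R <= 2 * 2 ^ K) (leqnn (2 ^ L)))); [lia | by rewrite mulnAC].
  lia.
have eR : R = (L + K).+1 by rewrite /R addn1.
have hfull : forall x, 1 <= x <= g R -> D g R (Z.of_nat x).
  rewrite eR; apply: (full ha hab H); [lia | by rewrite -eR].
have hn0 : ~ D g R (Z.of_nat (S g R).+1) by apply: Dnotbig; lia.
have := find_gap (P := fun x => D g R (Z.of_nat x)) (c := g R) (N := (S g R).+1) hfull hn0 isT.
case=> M0 [hM1 hM2 hM3 hM4].
have hI0 : I g R M0 by split.
have [Mq [hq1 hq2 hq3]] := iterD2 ha hab H hR2 hI0 (K.+1).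
have hSR : S g R < M0 + 2 ^ K.+1 * M0.
  have e1 : S g R = g R + S g (L + K) by rewrite eR; exact: (S_succ (L + K) ha hab H).
  have e2 := S_le (L + K) ha hab H.
  have e3 : g (L + K) < g R by rewrite eR; apply: (g_step ha hab H); lia.
  have e4 : (L + K) * g (L + K) <= 2 ^ K.+1 * M0.
    apply: leq_mul; [rewrite expnS; lia | lia].
  lia.
have hSq : S g (R + K.+1) < 2 * Mq by lia.
apply: (doubling ha hab H (q := R + K.+1) _ hq1 hSq); lia.
Qed.
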